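(* Let $T$ be a tree of order $n\geq 3$ and let $\mathcal{G}$ be an arbitrary Abelian group of order at least $5$. Then there exists a labeling $f\colon E(T)\to\mathcal{G}$ with $f(e)\neq 0$ for every edge $e$, $w_f(v)\neq 0$ for every vertex $v$, and $w_f(u)\neq w_f(v)$ for every edge $uv$.
   Context: $w_f(v)=\sum_{u\in N(v)}f(uv)$, the sum taken in $\mathcal{G}$; $0$ is the identity of $\mathcal{G}$. *)

(* Defs.v *)
From HB Require Import structures.
From mathcomp Require Import all_boot all_order all_algebra.
Set Implicit Arguments. Unset Strict Implicit. Unset Printing Implicit Defensive.
Import GRing.Theory.
Local Open Scope ring_scope.

Definition simple_graph (V : finType) (adj : rel V) : Prop :=
  symmetric adj /\ irreflexive adj.

Definition connected_graph (V : finType) (adj : rel V) : Prop :=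
  forall x y : V, connect adj x y.

Definition acyclic_graph (V : finType) (adj : rel V) : Prop :=
  forall (x : V) (p : seq V),
    uniq (x :: p) -> (2 <= size p)%N -> path adj x p -> ~~ adj (last x p) x.

Definition is_tree (V : finType) (adj : rel V) : Prop :=
  [/\ simple_graph adj, connected_graph adj & acyclic_graph adj].

(* An edge labeling is a map on unordered pairs {u,v}; only its values on
   edges matter. The weight w_f(v) = sum over neighbours u of f(uv). *)
Definition weight (V : finType) (adj : rel V) (G : zmodType)
  (f : {set V} -> G) (v : V) : G :=
  \sum_(u | adj v u) f [set v; u].

(* Main.v *)
Require Import Defs.
From mathcomp Require Import all_boot all_order all_algebra.
From mathcomp Require Import zify.
From Stdlib Require Import Lia.
Set Implicit Arguments. Unset Strict Implicit. Unset Printing Implicit Defensive.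
Import GRing.Theory.

Section Rooting.
Variables (V : finType) (adj : rel V).
Hypothesis sym : symmetric adj.
Hypothesis conn : connected_graph adj.
Variable r : V.

Definition reachn (v : V) (n : nat) : bool :=
  [exists t : n.-tuple V, path adj r t && (last r t == v)].

Lemma reachn_ex v : exists n, reachn v n.
Proof.
have /connectP [p pp lp] := conn r v.
exists (size p); apply/existsP; exists (in_tuple p); by rewrite /= pp lp eqxx.
Qed.

Lemma reachnP v n : reflect (exists p, [/\ path adj r p, last r p = v & size p = n]) (reachn v n).
Proof.
apply: (iffP existsP) => [[t /andP [pt /eqP lt]]|[p [pp lp sp]]].
  by exists t; rewrite size_tuple.
subst n; exists (in_tuple p); by rewrite /= pp lp eqxx.
Qed.

Definition dep v := ex_minn (reachn_ex v).

Lemma dep_min v n : reachn v n -> dep v <= n.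
Proof. by rewrite /dep; case: ex_minnP => m _ H /H. Qed.

Lemma dep_reach v : reachn v (dep v).
Proof. by rewrite /dep; case: ex_minnP. Qed.

Lemma dep_r : dep r = 0.
Proof. apply/eqP; rewrite -leqn0; apply: dep_min; apply/reachnP; by exists [::]. Qed.

Lemma dep_adj u v : adj u v -> dep v <= (dep u).+1.
Proof.
move=> a; apply: dep_min; have /reachnP [p [pp lp sp]] := dep_reach u.
apply/reachnP; exists (rcons p v); by rewrite rcons_path pp lp a last_rcons size_rcons sp.
Qed.

Lemma dep_par v : v != r -> exists u, adj u v && (dep v == (dep u).+1).
Proof.
move=> vr; have /reachnP [p [pp lp sp]] := dep_reach v.
move: pp lp sp; case/lastP: p => [|q x]; first by move=> _ /= E; rewrite E eqxx in vr.
rewrite rcons_path last_rcons size_rcons => /andP [pq a] E sp; subst x.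
exists (last r q); rewrite a /=; apply/eqP.
have h1 : dep (last r q) <= size q by apply: dep_min; apply/reachnP; exists q.
have := dep_adj a; lia.
Qed.

Lemma rooting_ex : exists (d : V -> nat) (par : V -> V),
  d r = 0 /\ forall v, v != r -> adj (par v) v /\ d v = (d (par v)).+1.
Proof.
exists dep, (fun v => odflt v [pick u | adj u v && (dep v == (dep u).+1)]).
split; first exact: dep_r.
move=> v vr; case: pickP => [u /andP [a /eqP e]|N] //=.
by have [u] := dep_par vr; rewrite N.
Qed.
End Rooting.
Section Tree.
Variables (V : finType) (adj : rel V).
Hypothesis sym : symmetric adj.
Hypothesis irr : irreflexive adj.
Hypothesis acyc : acyclic_graph adj.
Variables (r : V) (d : V -> nat) (par : V -> V).
Hypothesis dr : d r = 0.
Hypothesis hpar : forall v, v != r -> adj (par v) v /\ d v = (d (par v)).+1.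

Lemma dep0 v : d v = 0 -> v = r.
Proof. by case: (eqVneq v r) => // /hpar [_ ->]. Qed.

Lemma tree_path_aux n x y : d x + d y < n -> x != y -> exists p,
  [/\ path adj x p, last x p = y, uniq (x :: p),
      {in x :: p, forall z, [\/ z = x, z = y | d z < maxn (d x) (d y)]} &
      ((y != r -> x != par y) -> (x != r -> y != par x) -> 1 < size p)].
Proof.
elim: n x y => // n IH x y lt xy.
case: (leqP (d y) (d x)) => [le|lt2].
- have xr : x != r.
    apply/eqP => E; subst x; move: le; rewrite dr leqn0 => /eqP /dep0 E.
    by rewrite E eqxx in xy.
  have [a dx] := hpar xr.
  case: (eqVneq (par x) y) => [E|pxy].
    exists [:: y]; rewrite /= -E andbT sym a inE; split => //.
    + by rewrite E xy.
    + by move=> z; rewrite !inE => /orP [] /eqP ->; [constructor 1|constructor 2].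
    + by move=> _ /(_ xr).
  have [|p [pp lp up ep sp]] := IH (par x) y _ pxy; first by clear -lt dx; lia.
  have hx : x \notin par x :: p.
    apply/negP => /ep [E|E|]; first by rewrite -E in dx; clear -dx; lia.
      by rewrite E eqxx in xy.
    clear -dx le; lia.
  exists (par x :: p); split => //=.
  + by rewrite sym a.
  + by rewrite hx.
  + move=> z; rewrite inE => /orP [/eqP ->|/ep [->|->|]].
    * by constructor 1.
    * by constructor 3; clear -dx; lia.
    * by constructor 2.
    * move=> h; constructor 3; clear -h dx le; lia.
  + move=> _ _; case: p lp {hx ep up pp sp} => /= [E|]; first by rewrite E eqxx in pxy.
    by [].
- have yr : y != r by apply/eqP => E; move: lt2; rewrite E dr.
  have [a dy] := hpar yr.
  case: (eqVneq x (par y)) => [E|xpy].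
    exists [:: y]; rewrite /= E andbT a inE; split => //.
    + by rewrite -E xy.
    + by move=> z; rewrite !inE => /orP [] /eqP ->; [constructor 1|constructor 2].
    + by move/(_ yr).
  have [|p [pp lp up ep sp]] := IH x (par y) _ xpy; first by clear -lt2 lt dy; lia.
  have hy : y \notin x :: p.
    apply/negP => /ep [E|E|]; first by rewrite E eqxx in xy.
      by rewrite -E in dy; clear -dy; lia.
    clear -dy lt2; lia.
  exists (rcons p y); split.
  + by rewrite rcons_path pp lp a.
  + by rewrite last_rcons.
  + by rewrite -rcons_cons rcons_uniq hy up.
  + move=> z; rewrite -rcons_cons mem_rcons inE => /orP [/eqP ->|/ep [->|->|]].
    * by constructor 2.
    * by constructor 1.
    * by constructor 3; clear -dy lt2; lia.
    * move=> h; constructor 3; clear -h dy lt2; lia.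
  + move=> _ _; rewrite size_rcons; case: p lp {hy ep up pp sp} => /= [E|]; first by rewrite E eqxx in xpy.
    by [].
Qed.

Lemma edge_par u v : adj u v -> (u != r /\ v = par u) \/ (v != r /\ u = par v).
Proof.
move=> a.
have uv : u != v by apply/eqP => E; rewrite E irr in a.
have [p [pp lp up _ sp]] := tree_path_aux (ltnSn _) uv.
case: (boolP ((u != r) && (v == par u))) => [/andP [h1 /eqP h2]|H1]; first by left.
case: (boolP ((v != r) && (u == par v))) => [/andP [h1 /eqP h2]|H2]; first by right.
exfalso.
have sz : 1 < size p.
  apply: sp.
  - by move=> vr; apply/negP => /eqP E; rewrite vr E eqxx in H2.
  - by move=> ur; apply/negP => /eqP E; rewrite ur E eqxx in H1.
by have := acyc up sz pp; rewrite lp sym a.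
Qed.


Lemma set_par_inj u x : u != r -> x != r -> [set u; par u] = [set x; par x] -> u = x.
Proof.
move=> ur xr E.
have [_ du] := hpar ur; have [_ dx] := hpar xr.
have : u \in [set x; par x] by rewrite -E !inE eqxx.
rewrite !inE => /orP [/eqP //|/eqP ux].
have : par u \in [set x; par x] by rewrite -E !inE eqxx orbT.
rewrite !inE => /orP [/eqP pux|/eqP pux].
- by move: du dx; rewrite pux ux; lia.
- by move: du; rewrite pux -ux; lia.
Qed.

Variable G : zmodType.
Local Open Scope ring_scope.

Definition labf (g : V -> G) (X : {set V}) : G :=
  \sum_(u | (u != r) && (X == [set u; par u])) g u.

Lemma labf_par g x : x != r -> labf g [set x; par x] = g x.
Proof.
move=> xr; rewrite /labf (eq_bigl (pred1 x)) ?big_pred1_eq // => u /=.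
apply/andP/eqP => [[ur /eqP E]|->]; last by rewrite xr eqxx.
by apply: set_par_inj => //; rewrite E.
Qed.

Lemma weightE g v : weight adj (labf g) v =
  (if v != r then g v else 0) + \sum_(u | (u != r) && (par u == v)) g u.
Proof.
rewrite /weight (bigID (fun u => (u != r) && (par u == v))) /= addrC.
congr (_ + _).
- case: (boolP (v != r)) => vr.
    have [a dv] := hpar vr.
    rewrite (eq_bigl (pred1 (par v))) ?big_pred1_eq ?labf_par // => u /=.
    apply/andP/eqP => [[avu nc]|->].
      case: (edge_par avu) => [[_ ->]//|[ur E]].
      by rewrite ur E eqxx in nc.
    rewrite sym a; split => //; apply/negP => /andP [pvr /eqP E].
    have [_] := @hpar (par v) pvr.
    by rewrite E dv; lia.
  rewrite big_pred0 // => u; apply/negP => /andP [avu nc].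
  case: (edge_par avu) => [[vr2 _]|[ur E]]; first by rewrite vr2 in vr.
  by rewrite ur E eqxx in nc.
- rewrite (eq_bigl (fun u => (u != r) && (par u == v))) => [|u].
    apply: eq_bigr => u /andP [ur /eqP E].
    by rewrite setUC -E labf_par.
  case: (boolP ((u != r) && (par u == v))) => [/andP [ur /eqP E]|]; last by rewrite andbF.
  by have [a _] := hpar ur; rewrite -E a.
Qed.

Lemma rec_ex (pv : V -> G -> G) : exists F : V -> G,
  forall v, F v = pv v (\sum_(u | (u != r) && (par u == v)) F u).
Proof.
pose H := (\max_(v : V) d v).+1.
pose step (F : V -> G) v := pv v (\sum_(u | (u != r) && (par u == v)) F u).
pose Fk k := iter k step (fun _ => 0).
exists (fun v => Fk (H - d v)%N v) => v.
have lt u : (d u < H)%N by rewrite ltnS; exact: (leq_bigmax u).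
have E : (H - d v = (H - (d v).+1).+1)%N by have := lt v; lia.
rewrite E /= /step; congr (pv v _); apply: eq_bigr => u /andP [ur /eqP pu].
have [_ du] := hpar ur; by rewrite du pu.
Qed.

End Tree.

Section Sel.
Variable G : zmodType.
Local Open Scope ring_scope.

Definition tsel (a1 a2 b1 b2 : G) (o : bool) (S : G) : G :=
  if o then (if b1 != S then b1 else b2) else (if a1 != S then a1 else a2).

Lemma tsel_neqS a1 a2 b1 b2 o S : a1 != a2 -> b1 != b2 -> tsel a1 a2 b1 b2 o S != S.
Proof.
move=> h1 h2; rewrite /tsel; case: o.
- case: (eqVneq b1 S) => [<-|//]; by rewrite eq_sym.
- case: (eqVneq a1 S) => [<-|//]; by rewrite eq_sym.
Qed.

Lemma tsel_nz a1 a2 b1 b2 o S : a1 != 0 -> a2 != 0 -> b1 != 0 -> b2 != 0 ->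
  tsel a1 a2 b1 b2 o S != 0.
Proof. by move=> *; rewrite /tsel; case: o; case: ifP. Qed.

Lemma tsel_diff a1 a2 b1 b2 o1 o2 S1 S2 :
  a1 != b1 -> a1 != b2 -> a2 != b1 -> a2 != b2 -> o1 != o2 ->
  tsel a1 a2 b1 b2 o1 S1 != tsel a1 a2 b1 b2 o2 S2.
Proof.
move=> h1 h2 h3 h4; rewrite /tsel; case: o1; case: o2 => // _;
  do 2 case: ifP => _ //; by rewrite eq_sym.
Qed.

Lemma neq_shift (P z a : G) : z != a - P -> P + z != a.
Proof. by apply: contra => /eqP <-; rewrite addrAC subrr add0r. Qed.

Lemma avoid_ex (s0 : seq G) (l : seq G) : uniq s0 -> (5 <= size s0)%N ->
  (size l < 5)%N -> exists x, x \notin l.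
Proof.
move=> us ss sl; case: (boolP (all (fun x => x \in l) s0)) => [/allP H|/allPn [x _ H]].
  by move: (leq_trans ss (uniq_leq_size us H)); rewrite leqNgt sl.
by exists x.
Qed.
End Sel.


Unset Implicit Arguments.
Local Open Scope ring_scope.

Theorem mainTheorem9 (V : finType) (adj : rel V) (G : zmodType) :
  is_tree adj -> (3 <= #|V|)%N ->
  (exists s : seq G, uniq s /\ (5 <= size s)%N) ->
  exists f : {set V} -> G,
    [/\ (forall u v, adj u v -> f [set u; v] != 0),
        (forall v, weight adj f v != 0) &
        (forall u v, adj u v -> weight adj f u != weight adj f v)].
Proof.
move=> [[sym irr] conn acyc] card [s0 [us0 ss0]].
have av := avoid_ex us0 ss0.
have [a1 ha1] := av [:: 0] isT.
have [a2 ha2] := av [:: 0; a1] isT.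
have [b1 hb1] := av [:: 0; a1; a2] isT.
have [b2 hb2] := av [:: 0; a1; a2; b1] isT.
move: ha1 ha2 hb1 hb2; rewrite !inE !negb_or => a10 /andP [a20 a21]
  /andP [b10 /andP [b11 b12]] /andP [b20 /andP [b21 /andP [b22 b23]]].
have : (0 < #|V|)%N by apply: leq_trans card.
case/card_gt0P => r0 _.
have [d0 [par0 [d0r hp0]]] := rooting_ex conn r0.
have EP0 := edge_par sym irr acyc d0r hp0.
case: (@arg_maxnP _ r0 xpredT d0 isT) => v _ vmax.
have vr0 : v != r0.
  have /card_gt1P [x [y [_ _ xy]]] : (1 < #|V|)%N by apply: leq_trans card.
  have [w wr] : exists w, w != r0.
    case: (eqVneq x r0) => [E|]; last by exists x.
    by exists y; rewrite -E eq_sym.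
  have [_ dw] := hp0 w wr; have := vmax w isT.
  by apply: contraTneq => ->; rewrite d0r dw.
set c := par0 v.
have [acv dv] := hp0 v vr0; rewrite -/c in acv dv.
have leaf_max u w : d0 u = d0 v -> adj u w -> w = par0 u.
  move=> du auw; case: (EP0 u w auw) => [[_ ->]//|[wr E]].
  have [_ dw] := hp0 w wr; have := vmax w isT; rewrite dw -E du; clear; lia.
pose qo := if c != r0 then Some (par0 c) else None.
pose L := [set u | adj c u & Some u != qo].
have Lleaf u w : u \in L -> adj u w -> w = c.
  rewrite inE => /andP [acu uq] auw.
  case: (EP0 c u acu) => [[cr E]|[ur E]].
    by rewrite /qo cr -E eqxx in uq.
  have [_ du] := hp0 u ur; rewrite -E in du.
  by rewrite (leaf_max u w) -?E // du dv.
have vL : v \in L.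
  rewrite inE acv /qo; case: ifP => // cr.
  apply/eqP => -[E]; have [_] := hp0 c (idP cr).
  by rewrite -E dv; clear; lia.
have Lcard : qo = None -> (1 < #|L|)%N.
  rewrite /qo; case: ifP => // /negbFE /eqP cr _.
  have sub : [set: V] \subset c |: L.
    apply/subsetP => x _; rewrite !inE; case: (eqVneq x c) => //= xc.
    have xr : x != r0 by rewrite -cr.
    have [a dx] := hp0 x xr.
    have dc : d0 c = 0 by rewrite cr d0r.
    have := vmax x isT; rewrite dx dv dc => h.
    have /(dep0 hp0) px : d0 (par0 x) = 0 by clear -h; lia.
    apply/andP; split; first by rewrite cr -px a.
    by rewrite /qo cr eqxx.
  have := subset_leq_card sub; rewrite cardsT cardsU1 => h.
  have h2 := leq_b1 (c \notin L).
  by clear -h h2 card; lia.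
have [d [par [dr hp]]] := rooting_ex conn c.
have EP := edge_par sym irr acyc dr hp.
have chc u : ((u != c) && (par u == c)) = adj c u.
  apply/andP/idP => [[ur /eqP <-]|a]; first by have [] := hp u ur.
  case: (EP c u a) => [[]|[ur E]]; first by rewrite eqxx.
  by rewrite ur E eqxx.
have Lc u : u \in L -> (u != c) && (par u == c) by rewrite chc inE => /andP [].
have Lnochild x : x != c -> par x \notin L.
  move=> xc; apply/negP => pL; have [a _] := hp x xc.
  by have := Lleaf _ _ pL a; move/eqP; rewrite (negbTE xc).
pose tv (u : V) (S : G) := tsel a1 a2 b1 b2 (odd (d u)) S.
pose pv u S := tv u S - S.
have [F HF] := rec_ex dr hp pv.
have tvS u S : tv u S != S by apply: tsel_neqS; rewrite eq_sym.
have tv0 u S : tv u S != 0 by apply: tsel_nz.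
have Fnz u : F u != 0 by rewrite HF /pv subr_eq0 tvS.
have FS u : F u + \sum_(w | (w != c) && (par w == u)) F w =
            tv u (\sum_(w | (w != c) && (par w == u)) F w).
  by rewrite {1}HF /pv subrK.
pose s := if qo is Some q then F q else 0.
pose b := if qo is Some q then F q + \sum_(w | (w != c) && (par w == q)) F w else 0.
pose y := if b == 0 then a1 else b.
have y0 : y != 0 by rewrite /y; case: (eqVneq b 0).
have hby : (b == 0) || (b == y) by rewrite /y; case: (eqVneq b 0) => [->|_]; rewrite ?eqxx ?orbT.
have [l' hl'] : exists l', ((l' == v) && (L :\ v == set0)) || (l' \in L :\ v).
  case: (set_0Vmem (L :\ v)) => [->|[u hu]].
    by exists v; rewrite !eqxx.
  by exists u; rewrite hu orbT.
pose R := s + \sum_(u in L | (u != v) && (u != l')) y.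
have [y' hy'] := av [:: 0; - R] isT.
move: hy'; rewrite !inE negb_or => /andP [y'0 y'R].
pose lab0 u := if u == l' then y' else y.
pose P := s + \sum_(u in L | u != v) lab0 u.
have P0 : P != 0.
  case/orP: hl' => [/andP [/eqP lv /eqP L0]|hl'].
  - have E : \sum_(u in L | u != v) lab0 u = 0.
      rewrite big_pred0 // => u; apply/negP => /andP [uL uv].
      have : u \in L :\ v by rewrite in_setD1 uv uL.
      by rewrite L0 inE.
    rewrite /P E addr0 /s; case Eq: qo => [q|]; first exact: Fnz.
    exfalso; have := Lcard Eq.
    have : L \subset [set v].
      apply/subsetP => u uL; rewrite inE; apply/negPn/negP => uv.
      have : u \in L :\ v by rewrite in_setD1 uv uL.
      by rewrite L0 inE.
    move/subset_leq_card; rewrite cards1 => h1 h2.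
    by clear -h1 h2; lia.
  - have -> : P = R + y'.
      rewrite /P (bigD1 l') /=; last by move: hl'; rewrite in_setD1 => /andP [-> ->].
      rewrite /lab0 eqxx /R.
      rewrite (eq_big (fun u => (u \in L) && ((u != v) && (u != l'))) (fun _ => y)).
      + by rewrite addrCA addrC.
      + by move=> u; rewrite andbA.
      + by move=> u /andP [_ /negbTE ->].
    by apply: neq_shift; rewrite sub0r.
have [z hz] := av [:: 0; - P; y - P; y' - P] isT.
move: hz; rewrite !inE !negb_or => /and4P [z0 zP zy zy'].
pose lab u := if u == v then z else lab0 u.
pose g u := if u \in L then lab u else F u.
exists (labf c par g).
have gnz x : g x != 0.
  rewrite /g /lab /lab0; case: ifP => _; last exact: Fnz.
  by case: ifP => _ //; case: ifP.
have wE x := weightE sym irr acyc dr hp g x.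
have wgen x : x != c -> x \notin L -> weight adj (labf c par g) x =
     tv x (\sum_(w | (w != c) && (par w == x)) F w).
  move=> xc xL; rewrite wE xc /g (negbTE xL) -FS; congr (_ + _).
  apply: eq_bigr => w /andP [wc /eqP pw].
  case: ifP => // /Lc /andP [_ /eqP]; rewrite pw => E.
  by rewrite E eqxx in xc.
have wL x : x \in L -> weight adj (labf c par g) x = lab x.
  move=> xL; have /andP [xc _] := Lc x xL.
  rewrite wE xc /g xL big_pred0 ?addr0 // => w; apply/negP => /andP [wc /eqP pw].
  by have := Lnochild w wc; rewrite pw xL.
have wc : weight adj (labf c par g) c = P + z.
  rewrite wE eqxx add0r (eq_bigl (adj c)) => [|u]; last exact: chc.
  rewrite (bigID (fun u => u \in L)) /=.
  rewrite (eq_bigl (fun u => u \in L)) => [|u]; last first.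
    by case: (boolP (u \in L)) => uL; rewrite ?andbF // andbT; move: uL; rewrite inE => /andP [].
  rewrite (bigD1 v vL) /= /g vL /lab eqxx.
  rewrite (eq_bigr lab0) => [|u /andP [uL uv]]; last by case: ifP => [_|/negbT/negP H]; [rewrite (negbTE uv) | exfalso; apply: H; exact: uL].
  have -> : \sum_(i | adj c i && (i \notin L)) (if i \in L then lab i else F i) = s.
    rewrite /s; case Eq: qo => [q|].
      rewrite (eq_bigl (pred1 q)) => [|u]; last first.
        rewrite /= inE negb_and negbK Eq.
        apply/idP/eqP => [/andP [acu /orP [/negP//|/eqP [->]]]//|->].
        move: Eq; rewrite /qo; case: ifP => // cr [<-].
        by have [a _] := hp0 c cr; rewrite sym a eqxx orbT.
      rewrite big_pred1_eq ifN //; rewrite inE negb_and negbK Eq eqxx orbT //.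
    rewrite big_pred0 // => u; rewrite inE negb_and negbK Eq.
    by case: (adj c u).
  by rewrite /P addrC (addrC z) addrA.
have Pz a : a \in [:: z; y'; y] -> P + z != a.
  rewrite !inE => /or3P [/eqP ->|/eqP ->|/eqP ->].
  - apply/eqP => E; have : P = 0 by apply: (addIr z); rewrite E add0r.
    by move/eqP; rewrite (negbTE P0).
  - exact: neq_shift.
  - exact: neq_shift.
have childpar x : x != c -> weight adj (labf c par g) x != weight adj (labf c par g) (par x).
  move=> xc; have [a dx] := hp x xc.
  case: (eqVneq (par x) c) => [pc|pc].
  - rewrite pc wc; have acx : adj c x by rewrite -pc.
    case: (boolP (x \in L)) => xL.
      rewrite wL // eq_sym; apply: Pz; rewrite /lab /lab0.
      by case: ifP => _; [|case: ifP => _]; rewrite !inE eqxx ?orbT.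
    have Eq : qo = Some x.
      by move: xL; rewrite inE acx /= negbK => /eqP ->.
    have -> : weight adj (labf c par g) x = b by rewrite wgen // /b Eq FS.
    rewrite eq_sym; case/orP: hby => /eqP ->; last by apply: Pz; rewrite !inE eqxx !orbT.
    by apply: neq_shift; rewrite sub0r.
  - have xL : x \notin L by apply/negP => /Lc /andP [_ /eqP E]; rewrite E eqxx in pc.
    rewrite !wgen //; last exact: Lnochild.
    apply: tsel_diff; rewrite 1?eq_sym //.
    by rewrite dx /=; case: odd.
split.
- move=> x w a; case: (EP x w a) => [[xc ->]|[wc' ->]].
    by rewrite (labf_par dr hp) // gnz.
  by rewrite setUC (labf_par dr hp) // gnz.
- move=> x; case: (eqVneq x c) => [->|xc].
    by rewrite wc; apply: neq_shift; rewrite sub0r.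
  case: (boolP (x \in L)) => xL.
    by have := gnz x; rewrite wL // /g xL.
  by rewrite wgen.
- move=> x w a; case: (EP x w a) => [[xc ->]|[wc' ->]]; first exact: childpar.
  by rewrite eq_sym; apply: childpar.
Qed.
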